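(* Consider a persuasion instance in the public mode, and fix a representative set $\bar{\mathcal A}$. For every stable public policy $\sigma:\Omega\to\Delta(\mathcal A\times G)$ there exists a stable public policy $\bar\sigma:\Omega\to\Delta(C)$, where $$C=\{(\bar{\mathbf a},\beta):\bar{\mathbf a}\in\bar{\mathcal A},\ \beta\in B^{\mathrm{pub}}_{\rho_{\bar{\mathbf a}}}\},$$ such that $u_0(\bar\sigma)\ge u_0(\sigma)$. Here a meta-signal $c=(\bar{\mathbf a},\beta)\in C$ recommends the joint action $\bar{\mathbf a}$ and carries $\beta$ as its additional (publicly observed) information. Moreover, for every $c\in C$ sent by $\bar\sigma$ with positive probability, the public signature of $c$ (under $\bar\sigma$) is exactly $c$.
   Context: A persuasion instance consists of: a finite set $\Omega$ of worlds; a prior $\mu\in\Delta(\Omega)$; agents $N=\{1,\dots,n\}$; a finite action set $A$; a partition $\mathcal T$ of $N$ into nonempty sets called types; for each $T\in\mathcal T$ a utility $u_T(a,\rho\mid\omega)\in\mathbb R$ defined for $a\in A$, action profiles $\rho$, and $\omega\in\Omega$; a principal utility $u_0(\rho\mid\omega)\in\mathbb R$; and an integer $d\ge 1$ (maximum coalition size). Joint actions are $\mathbf a\in\mathcal A=A^n$; the action profile of $\mathbf a$ is $\rho_{\mathbf a}:\mathcal T\times A\to\mathbb Z_{\ge0}$, $\rho_{\mathbf a}(T,a)=|\{i\in T:a_i=a\}|$. For $i\in T$, $u_i(\mathbf a\mid\omega)=u_T(a_i,\rho_{\mathbf a}\mid\omega)$; for $p\in\Delta(\Omega)$ write $u(\cdot\mid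 p)=\mathbb E_{\omega\sim p}u(\cdot\mid\omega)$. A policy is a map $\sigma:\Omega\to\Delta(\mathcal A\times G)$ (finitely supported distributions), where $G$ is a set of tuples $\mathbf g=(g_i)_{i\in N}$; elements $s=(\mathbf a,\mathbf g)$ are meta-signals. The part $s_i$ of $s$ observed by agent $i$ is $s_i=(\mathbf a,\mathbf g)$ in the public mode, $s_i=(\mathbf a,g_i)$ in the semi-private mode, and $s_i=(a_i,g_i)$ in the private mode. Agent $i$'s posterior upon observing $s_i$ is $\Pr(\tilde{\mathbf a},\omega\mid s_i)=\mu(\omega)\,\sigma(\{s'=(\tilde{\mathbf a},\mathbf g'):s'_i=s_i\}\mid\omega)\big/\sum_{\omega'}\mu(\omega')\,\sigma(\{s':s'_i=s_i\}\mid\omega')$. A meta-signal $s$ is unstable if there exist a nonempty $N'\subseteq N$ with $|N'|\le d$ and actions $(a'_i)_{i\in N'}$ such that for every $i\in N'$: $\sum_{\tilde{\mathbf a},\omega}\Pr(\tilde{\mathbf a},\omega\mid s_i)\,\big(u_i(\tilde{\mathbf a}\oplus\mathbf a'\mid\omega)-u_i(\tilde{\mathbf a}\mid\omega)\big)>0$, where $\tilde{\mathbf a}\oplus\mathbf a'$ replaces $\tilde a_i$ by $a'_i$ for all $i\in N'$; otherwise $s$ is stable. A policy is stable if every meta-signal it sends with positive probability is stable. The principal's utility is $u_0(\sigma)=\sum_\omega\mu(\omega)\sum_{(\mathbf a,\mathbf g)}\sigma((\mathbf a,\mathbf g)\mid\omega)\,u_0(\rho_{\mathbf a}\mid\omega)$.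 A representative set $\bar{\mathcal A}\subseteq\mathcal A$ contains, for each action profile $\rho$ realizable by some joint action, exactly one $\bar{\mathbf a}$ with $\rho_{\bar{\mathbf a}}=\rho$; $\bar{\mathbf a}$ is the representative of every $\mathbf a$ with $\rho_{\mathbf a}=\rho$. Deviations: $D_*$ is the set of functions $\delta:\mathcal T\times A\times A\to\mathbb Z_{\ge0}$ with $1\le\sum_{T,a,a'}\delta(T,a,a')\le d$ and $\delta(T,a,a)=0$ for all $T,a$; for a profile $\rho$, $D_\rho=\{\delta\in D_*:\sum_{a'}\delta(T,a,a')\le\rho(T,a)\ \forall T,a\}$; and $(\rho\oplus\delta)(T,a)=\rho(T,a)-\sum_{a'}\delta(T,a,a')+\sum_{a''}\delta(T,a'',a)$. The public blocking profile of a meta-signal $s=(\mathbf a,\mathbf g)$ with posterior $p_s=\Pr(\cdot\mid s)\in\Delta(\Omega)$ is $\beta=\{(\delta,T,a,a')\in D_{\rho_{\mathbf a}}\times\mathcal T\times A^2:\delta(T,a,a')>0,\ u_T(a,\rho_{\mathbf a}\mid p_s)\ge u_T(a',\rho_{\mathbf a}\oplus\delta\mid p_s)\}$. $B^{\mathrm{pub}}_\rho$ is the set of all subsets $\beta\subseteq D_\rho\times\mathcal T\times A^2$ such that every $(\delta,T,a,a')\in\beta$ has $\delta(T,a,a')>0$ and, for every $\delta\in D_\rho$, some element of $\beta$ has first coordinate $\delta$. The public signature of $s=(\mathbf a,\mathbf g)$ is $(\bar{\mathbf a},\beta)$ where $\bar{\mathbf a}$ is the representative of $\mathbf a$ and $\beta$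 is the public blocking profile of $s$. *)

(* Defs.v *)
From HB Require Import structures.
From mathcomp Require Import all_boot all_order all_algebra.
Set Implicit Arguments. Unset Strict Implicit. Unset Printing Implicit Defensive.
Import Order.TTheory GRing.Theory Num.Theory.
Local Open Scope ring_scope.

(* Types are encoded by a labelling [tp : 'I_n -> K];
   the type of agent i is the fibre of tp i (the partition T of N is the set of
   nonempty fibres; nonemptiness of every label is the hypothesis [tp_surj]).
   Action profiles are functions K * A -> nat. *)
Record instance (R : realFieldType) := Instance {
  Omega : finType;
  mu : Omega -> R;
  n : nat;
  A : finType;
  K : finType;
  tp : 'I_n -> K;
  u : K -> A -> {ffun K * A -> nat} -> Omega -> R;
  u0 : {ffun K * A -> nat} -> Omega -> R;
  d : nat                          (* maximum coalition size *)
}.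
Arguments Omega {R} i.
Arguments mu {R} i _.
Arguments n {R} i.
Arguments A {R} i.
Arguments K {R} i.
Arguments tp {R} i _.
Arguments u {R} i _ _ _ _.
Arguments u0 {R} i _ _.
Arguments d {R} i.

Section Defs.
Variable R : realFieldType.
Variable I : instance R.

Definition wf_instance : Prop :=
  [/\ (forall w, 0 <= mu I w), \sum_(w : Omega I) mu I w = 1,
      (forall k : K I, exists i : 'I_(n I), tp I i = k) & (0 < d I)%N].

Definition jact := {ffun 'I_(n I) -> A I}.
Definition profile := {ffun K I * A I -> nat}.

Definition prof (a : jact) : profile :=
  [ffun ta : K I * A I => #|[set i : 'I_(n I) | (tp I i == ta.1) && (a i == ta.2)]|].

Definition uag (a : jact) (i : 'I_(n I)) (w : Omega I) : R :=
  u I (tp I i) (a i) (prof a) w.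

Definition replace (N' : {set 'I_(n I)}) (a a' : jact) : jact :=
  [ffun i => if i \in N' then a' i else a i].

Definition is_rep_set (Abar : {set jact}) : Prop :=
  (forall a : jact, exists2 ab, ab \in Abar & prof ab = prof a) /\
  {in Abar &, forall a1 a2, prof a1 = prof a2 -> a1 = a2}.

(* the representative of a (well defined when Abar is a representative set) *)
Definition rep_of (Abar : {set jact}) (a : jact) : jact :=
  odflt a [pick ab in Abar | prof ab == prof a].

(* Deviations.  Since sum delta <= d, every entry of delta is <= d, so delta
   is encoded as a finite function with values in 'I_(d+1). *)
Definition dev := {ffun K I * A I * A I -> 'I_(d I).+1}.
Definition dsum (de : dev) : nat := (\sum_(x : K I * A I * A I) (de x : nat))%N.

Definition Dstar : {set dev} :=
  [set de : dev | (1 <= dsum de <= d I)%N &&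
                  [forall ta : K I * A I, (de (ta.1, ta.2, ta.2) : nat) == 0%N]].

Definition Drho (rho : profile) : {set dev} :=
  [set de in Dstar | [forall ta : K I * A I,
      (\sum_(a' : A I) (de (ta.1, ta.2, a') : nat) <= rho ta)%N]].

Definition padd (rho : profile) (de : dev) : profile :=
  [ffun ta : K I * A I =>
     (rho ta - \sum_(a' : A I) (de (ta.1, ta.2, a') : nat)
             + \sum_(a'' : A I) (de (ta.1, a'', ta.2) : nat))%N].

Definition uexp (T : K I) (a : A I) (rho : profile) (p : Omega I -> R) : R :=
  \sum_(w : Omega I) p w * u I T a rho w.

Definition Bpub (rho : profile) (be : {set dev * K I * A I * A I}) : bool :=
  [forall x in be, let: (de, T, a, a') := x in (de \in Drho rho) && (0 < de (T, a, a'))%N]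
  && [forall de in Drho rho, exists x in be, x.1.1.1 == de].

Section Policy.
Variable G : eqType.
Notation sig := (jact * G)%type.

Definition is_policy_on (S : seq sig) (sigma : Omega I -> sig -> R) : Prop :=
  [/\ uniq S, (forall w s, 0 <= sigma w s),
      (forall w s, s \notin S -> sigma w s = 0) &
      (forall w, \sum_(s <- S) sigma w s = 1)].

Variable S : seq sig.
Variable sigma : Omega I -> sig -> R.

Definition prob_sent (s : sig) : R := \sum_(w : Omega I) mu I w * sigma w s.

(* Posterior Pr(ta, w | s_i) of an agent whose observation map is [obs]
   (s_i = obs s). *)
Definition posterior (Y : eqType) (obs : sig -> Y) (y : Y) (ta : jact) (w : Omega I) : R :=
  (mu I w * \sum_(s' <- S | (obs s' == y) && (s'.1 == ta)) sigma w s') /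
  (\sum_(w' : Omega I) mu I w' * \sum_(s' <- S | obs s' == y) sigma w' s').

Definition unstable (Y : eqType) (obs : 'I_(n I) -> sig -> Y) (s : sig) : Prop :=
  exists N' : {set 'I_(n I)}, [/\ N' != set0, (#|N'| <= d I)%N &
    exists a' : jact, forall i, i \in N' ->
      0 < \sum_(ta : jact) \sum_(w : Omega I)
            posterior (obs i) (obs i s) ta w *
            (uag (replace N' ta a') i w - uag ta i w)].

Definition stable_policy (Y : eqType) (obs : 'I_(n I) -> sig -> Y) : Prop :=
  forall s, 0 < prob_sent s -> ~ unstable obs s.

(* public mode: every agent observes the whole meta-signal *)
Definition obs_pub : 'I_(n I) -> sig -> sig := fun _ s => s.

Definition stable_public_policy : Prop := stable_policy obs_pub.

Definition post_pub (s : sig) (w : Omega I) : R :=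
  \sum_(ta : jact) posterior id s ta w.

Definition pub_block (s : sig) : {set dev * K I * A I * A I} :=
  [set x : dev * K I * A I * A I |
     let: (de, T, a, a') := x in
     [&& de \in Drho (prof s.1), (0 < de (T, a, a'))%N &
         uexp T a' (padd (prof s.1) de) (post_pub s) <=
         uexp T a (prof s.1) (post_pub s)]].

Definition pub_signature (Abar : {set jact}) (s : sig) : jact * {set dev * K I * A I * A I} :=
  (rep_of Abar s.1, pub_block s).

Definition u0_of : R :=
  \sum_(w : Omega I) mu I w * \sum_(s <- S) sigma w s * u0 I (prof s.1) w.

End Policy.
End Defs.

(* Main.v *)
Require Import Defs.
From HB Require Import structures.
From mathcomp Require Import all_boot all_order all_algebra.
Import Order.TTheory GRing.Theory Num.Theory.
Set Implicit Arguments. Unset Strict Implicit. Unset Printing Implicit Defensive.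
Local Open Scope ring_scope.

Lemma card_sumP (T : finType) (P : pred T) : #|[set x | P x]| = (\sum_x (P x : nat))%N.
Proof.
rewrite -sum1_card big_mkcond /=; apply: eq_bigr => x _.
by rewrite inE; case: (P x).
Qed.

Lemma card_sumS (T : finType) (B : {set T}) : #|B| = (\sum_x (x \in B : nat))%N.
Proof.
rewrite -sum1_card big_mkcond /=; apply: eq_bigr => x _.
by case: (x \in B).
Qed.

Lemma sum_pred1_nat (T : finType) (x : T) (F : T -> nat) :
  (\sum_y ((x == y) : nat) * F y)%N = F x.
Proof.
rewrite (bigD1 x) //= eqxx mul1n big1 ?addn0 // => y /negbTE.
by rewrite eq_sym => ->.
Qed.

Lemma post_pubE (R : realFieldType) (I : instance R) (G : eqType) (S : seq (jact I * G))
  (sigma : Omega I -> jact I * G -> R) s w :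
  is_policy_on S sigma ->
  post_pub S sigma s w = mu I w * sigma w s / prob_sent sigma s.
Proof.
move=> [uS s0 sout s1].
have key : forall w, \sum_(s' <- S | s' == s) sigma w s' = sigma w s.
  move=> w'; case: (boolP (s \in S)) => sS.
    rewrite -big_filter.
    have -> : [seq s' <- S | s' == s] = [:: s].
      by rewrite (filter_pred1_uniq uS sS).
    by rewrite big_seq1.
  rewrite sout // big1_seq // => s' /andP [/eqP -> ]; rewrite (negbTE sS).
  done.
rewrite /post_pub (bigD1 s.1) //= big1 ?addr0; last first.
  move=> ta nta; rewrite /posterior big1_seq ?mulr0 ?mul0r // => s' /andP [/andP [/eqP -> /eqP h] _].
  by rewrite h eqxx in nta.
rewrite /posterior /prob_sent.
have -> : \sum_(s' <- S | (s' == s) && (s'.1 == s.1)) sigma w s' = sigma w s.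
  rewrite -(key w); apply: eq_bigl => s'; case: eqP => // -> ; by rewrite eqxx.
by congr (_ / _); apply: eq_bigr => w' _; rewrite key.
Qed.

Lemma posterior_off (R : realFieldType) (I : instance R) (G : eqType) (S : seq (jact I * G))
  (sigma : Omega I -> jact I * G -> R) s ta w :
  ta != s.1 -> posterior S sigma id s ta w = 0.
Proof.
move=> nta; rewrite /posterior big1_seq ?mulr0 ?mul0r // => s' /andP [/andP [/eqP -> /eqP h] _].
by rewrite h eqxx in nta.
Qed.

Lemma post_pub_post (R : realFieldType) (I : instance R) (G : eqType) (S : seq (jact I * G))
  (sigma : Omega I -> jact I * G -> R) s w :
  post_pub S sigma s w = posterior S sigma id s s.1 w.
Proof.
rewrite /post_pub (bigD1 s.1) //= big1 ?addr0 // => ta nta.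
by rewrite posterior_off.
Qed.

Definition gain (R : realFieldType) (I : instance R) (G : eqType) (S : seq (jact I * G))
  (sigma : Omega I -> jact I * G -> R) (s : jact I * G) (N' : {set 'I_(n I)}) (a' : jact I) i :=
  uexp (tp I i) (a' i) (prof (replace N' s.1 a')) (post_pub S sigma s)
  - uexp (tp I i) (s.1 i) (prof s.1) (post_pub S sigma s).

Lemma gainE (R : realFieldType) (I : instance R) (G : eqType) (S : seq (jact I * G))
  (sigma : Omega I -> jact I * G -> R) s (N' : {set 'I_(n I)}) (a' : jact I) i : i \in N' ->
  \sum_(ta : jact I) \sum_(w : Omega I)
     posterior S sigma (obs_pub (G:=G) i) (obs_pub (G:=G) i s) ta w *
            (uag (replace N' ta a') i w - uag ta i w)
  = gain S sigma s N' a' i.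
Proof.
move=> iN.
rewrite (bigD1 s.1) //= [X in _ + X]big1 ?addr0; last first.
  by move=> ta nta; apply: big1 => w _; rewrite /obs_pub (posterior_off _ _ _ nta) mul0r.
rewrite /gain /uexp -sumrB; apply: eq_bigr => w _.
rewrite post_pub_post /uag /replace ffunE iN -mulrBr.
done.
Qed.

Lemma unstableE (R : realFieldType) (I : instance R) (G : eqType) (S : seq (jact I * G))
  (sigma : Omega I -> jact I * G -> R) s :
  unstable S sigma (obs_pub (G:=G)) s <->
  exists N' a', [/\ N' != set0, (#|N'| <= d I)%N &
     forall i, i \in N' -> 0 < gain S sigma s N' a' i].
Proof.
split.
  move=> [N' [N0 Nd [a' H]]]; exists N', a'; split => // i iN.
  by rewrite -gainE // H.
move=> [N' [a' [N0 Nd H]]]; exists N'; split => //; exists a' => i iN.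
by rewrite gainE // H.
Qed.

Local Close Scope ring_scope.

Definition key (R : realFieldType) (I : instance R) (a a' : jact I) (i : 'I_(n I)) : K I * A I * A I :=
  (tp I i, a i, a' i).
Definition cnt (R : realFieldType) (I : instance R) (a : jact I) (N' : {set 'I_(n I)}) (a' : jact I)
  (t : K I * A I * A I) : nat := \sum_i ((i \in N') && (key a a' i == t)).

Lemma andb_natC (b c : bool) : ((b && c) : nat) = (c : nat) * b.
Proof. by case: b; case: c. Qed.

Lemma cnt_sum (R : realFieldType) (I : instance R) (a a' : jact I) N' :
  \sum_t cnt a N' a' t = #|N'|.
Proof.
rewrite card_sumS /cnt exchange_big /=; apply: eq_bigr => i _.
under eq_bigr => t _ do rewrite andb_natC.
by rewrite sum_pred1_nat.
Qed.

Lemma profE (R : realFieldType) (I : instance R) (a : jact I) T x :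
  prof a (T, x) = \sum_i ((tp I i == T) && (a i == x)).
Proof. by rewrite /prof ffunE card_sumP. Qed.

Lemma cnt_row (R : realFieldType) (I : instance R) (a a' : jact I) N' T x :
  \sum_y cnt a N' a' (T, x, y) = \sum_i ((i \in N') && (tp I i == T) && (a i == x)).
Proof.
rewrite /cnt exchange_big /=; apply: eq_bigr => i _.
have E : forall y, (((i \in N') && (key a a' i == (T, x, y))) : nat) =
   (a' i == y) * ((i \in N') && (tp I i == T) && (a i == x)).
  move=> y; rewrite /key !xpair_eqE.
  by case: (i \in N'); case: (tp I i == T); case: (a i == x); case: (a' i == y).
under eq_bigr => y _ do rewrite E.
by rewrite sum_pred1_nat.
Qed.

Lemma cnt_col (R : realFieldType) (I : instance R) (a a' : jact I) N' T y :
  \sum_x cnt a N' a' (T, x, y) = \sum_i ((i \in N') && (tp I i == T) && (a' i == y)).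
Proof.
rewrite /cnt exchange_big /=; apply: eq_bigr => i _.
have E : forall x, (((i \in N') && (key a a' i == (T, x, y))) : nat) =
   (a i == x) * ((i \in N') && (tp I i == T) && (a' i == y)).
  move=> x; rewrite /key !xpair_eqE.
  by case: (i \in N'); case: (tp I i == T); case: (a i == x); case: (a' i == y).
under eq_bigr => x _ do rewrite E.
by rewrite sum_pred1_nat.
Qed.

Lemma prof_replace (R : realFieldType) (I : instance R) (a a' : jact I) N' T y :
  prof (replace N' a a') (T, y) =
  (prof a (T, y) - \sum_b cnt a N' a' (T, y, b) + \sum_b cnt a N' a' (T, b, y))%N.
Proof.
rewrite cnt_row cnt_col !profE.
set Z := (\sum_i ((i \notin N') && (tp I i == T) && (a i == y)))%N.
have -> : (\sum_i ((tp I i == T) && (a i == y)) =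
          Z + \sum_i ((i \in N') && (tp I i == T) && (a i == y)))%N.
  rewrite -big_split /=; apply: eq_bigr => i _.
  by case: (i \in N'); case: (tp I i == T); case: (a i == y).
rewrite addnK /Z -big_split /=; apply: eq_bigr => i _.
rewrite /replace ffunE.
by case: (i \in N'); case: (tp I i == T); case: (a i == y); case: (a' i == y).
Qed.

Lemma sum_eq1 (T : finType) (x : T) : (\sum_(y : T) ((y == x) : nat))%N = 1%N.
Proof.
under eq_bigr => y _ do rewrite eq_sym -[((x == y) : nat)]muln1.
by rewrite sum_pred1_nat.
Qed.

Lemma realize (R : realFieldType) (I : instance R) (a : jact I) (f : K I * A I * A I -> nat) :
  (forall T x, \sum_y f (T, x, y) <= prof a (T, x))%N ->
  exists N' a', forall t, cnt a N' a' t = f t.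
Proof.
move: {2}(\sum_t f t)%N (erefl (\sum_t f t)%N) => m.
elim: m f => [|m IH] f Hm Hf.
  exists set0, a => t; rewrite /cnt big1 => [|i _]; last by rewrite in_set0.
  apply/esym/eqP; rewrite -leqn0 -Hm (bigD1 t) //=; exact: leq_addr.
case: (pickP (fun t => 0 < f t)%N) => [t0 ht0 | H0]; last first.
  move: Hm; rewrite big1 // => t _; move: (H0 t) => /=.
  by rewrite lt0n => /negbFE/eqP.
pose f' t := (f t - (t == t0))%N.
have ff : forall t, f t = (f' t + (t == t0))%N.
  move=> t; rewrite /f'; case: eqP => [->|] /=; last by rewrite subn0 addn0.
  by rewrite subnK.
have Hm' : (\sum_t f' t)%N = m.
  apply/eq_add_S; rewrite -Hm -addn1 -(sum_eq1 t0) -big_split /=.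
  by apply: eq_bigr => t _; rewrite ff.
have Hf' : forall T x, (\sum_y f' (T, x, y) <= prof a (T, x))%N.
  move=> T x; apply: leq_trans (Hf T x); apply: leq_sum => y _; exact: leq_subr.
have [N' [a' Hc]] := IH f' Hm' Hf'.
clear Hm' Hf'; rewrite /f' in ff Hc; clear f'; move: t0 ht0 ff Hc => [[T0 x0] y0] ht0 ff Hc.
pose E := [set i | (tp I i == T0) && (a i == x0)].
have : ~~ (E \subset N').
  apply/negP => /subsetP sub.
  have h1 : (\sum_i ((i \in N') && (tp I i == T0) && (a i == x0)) =
             \sum_i ((tp I i == T0) && (a i == x0)))%N.
    apply: eq_bigr => i _.
    case h: ((tp I i == T0) && (a i == x0)); last by case: (i \in N') => /=; rewrite ?andbT; move: h; case: (tp I i == T0); case: (a i == x0).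
    have := sub i; rewrite inE h => -> //; by rewrite /= h.
  move: h1; rewrite -(cnt_row a a') -profE => h1.
  have h2 : (\sum_y f (T0, x0, y) = \sum_y cnt a N' a' (T0, x0, y) + 1)%N.
    rewrite -(sum_eq1 y0) -big_split /=; apply: eq_bigr => y _.
    by rewrite ff Hc !xpair_eqE !eqxx.
  have := Hf T0 x0; rewrite h2 h1 addn1 ltnn //.
case/subsetPn => i; rewrite inE => /andP [/eqP hT /eqP hx] iN.
exists (i |: N'), [ffun j => if j == i then y0 else a' j] => t.
rewrite ff -Hc /cnt (bigD1 i) //= [in RHS](bigD1 i) //= (negbTE iN) /= add0n.
rewrite setU11 /= /key ffunE eqxx hT hx addnC eq_sym; congr (_ + _)%N.
apply: eq_bigr => j ji; rewrite in_setU1 (negbTE ji) /= ffunE (negbTE ji) //.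
Qed.

Definition mkdev (R : realFieldType) (I : instance R) (a : jact I) (N' : {set 'I_(n I)}) (a' : jact I)
  : dev I := [ffun t => inord (cnt a N' a' t)].

Lemma cnt_le (R : realFieldType) (I : instance R) (a a' : jact I) (N' : {set 'I_(n I)}) t :
  (cnt a N' a' t <= #|N'|)%N.
Proof. by rewrite -(cnt_sum a a') (bigD1 t) //= leq_addr. Qed.

Lemma mkdevE (R : realFieldType) (I : instance R) (a a' : jact I) (N' : {set 'I_(n I)}) t :
  (#|N'| <= d I)%N -> (mkdev a N' a' t : nat) = cnt a N' a' t.
Proof.
move=> hd; rewrite /mkdev ffunE inordK // ltnS; exact: leq_trans (cnt_le _ _ _ _) hd.
Qed.

Lemma cnt_pos (R : realFieldType) (I : instance R) (a a' : jact I) (N' : {set 'I_(n I)}) t :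
  (0 < cnt a N' a' t)%N -> exists2 i, i \in N' & key a a' i = t.
Proof.
rewrite /cnt lt0n sum_nat_eq0 => /forallPn [i /=]; rewrite eqb0 negbK => /andP [iN /eqP k].
by exists i.
Qed.

Lemma cnt_diag0 (R : realFieldType) (I : instance R) (a a' : jact I) (N' : {set 'I_(n I)}) T x :
  (forall i, i \in N' -> a' i != a i) -> cnt a N' a' (T, x, x) = 0%N.
Proof.
move=> ha; apply/eqP; rewrite eqn0Ngt; apply/negP => /cnt_pos [i iN].
rewrite /key => -[_ h1 h2]; by move: (ha i iN); rewrite h1 h2 eqxx.
Qed.

Lemma mkdev_Drho (R : realFieldType) (I : instance R) (a a' : jact I) (N' : {set 'I_(n I)}) :
  N' != set0 -> (#|N'| <= d I)%N -> (forall i, i \in N' -> a' i != a i) ->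
  mkdev a N' a' \in Drho (prof a).
Proof.
move=> N0 hd ha.
have ds : dsum (mkdev a N' a') = #|N'|.
  by rewrite /dsum -(cnt_sum a a'); apply: eq_bigr => t _; rewrite mkdevE.
rewrite /Drho /Dstar !inE ds hd card_gt0 N0 /=; apply/andP; split.
  by apply/forallP => -[T x] /=; rewrite mkdevE // cnt_diag0.
apply/forallP => -[T x] /=.
under eq_bigr => y _ do rewrite mkdevE //.
rewrite cnt_row profE; apply: leq_sum => i _.
by case: (i \in N').
Qed.

Lemma padd_mkdev (R : realFieldType) (I : instance R) (a a' : jact I) (N' : {set 'I_(n I)}) :
  (#|N'| <= d I)%N -> prof (replace N' a a') = padd (prof a) (mkdev a N' a').
Proof.
move=> hd; apply/ffunP => -[T y]; rewrite prof_replace /padd [in RHS]ffunE /=.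
by congr (_ - _ + _)%N; apply: eq_bigr => b _; rewrite mkdevE.
Qed.

Lemma realize_dev (R : realFieldType) (I : instance R) (a : jact I) de :
  de \in Drho (prof a) ->
  exists (N' : {set 'I_(n I)}) (a' : jact I), [/\ N' != set0, (#|N'| <= d I)%N, (forall i, i \in N' -> a' i != a i)
                  & mkdev a N' a' = de].
Proof.
rewrite /Drho /Dstar !inE => /andP [/andP [/andP [d1 d2] /forallP diag] /forallP row].
have [N' [a' Hc]] := realize (f := fun t => (de t : nat))
   (fun T x => row (T, x)).
have cs : #|N'| = dsum de by rewrite -(cnt_sum a a'); apply: eq_bigr => t _; rewrite Hc.
have hd : (#|N'| <= d I)%N by rewrite cs.
have ha : forall i, i \in N' -> a' i != a i.
  move=> i iN; apply/negP => /eqP e.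
  have : (0 < cnt a N' a' (tp I i, a i, a i))%N.
    rewrite /cnt (bigD1 i) //= iN /key e eqxx //.
  by rewrite Hc; move: (diag (tp I i, a i)) => /= /eqP ->.
exists N', a'; split => //.
  by rewrite -card_gt0 cs.
by apply/ffunP => t; apply: val_inj; rewrite /= mkdevE // Hc.
Qed.

Local Open Scope ring_scope.

Lemma group_sum (R : realFieldType) (T C : eqType) (r : seq T) (f : T -> C) (F : T -> R) :
  \sum_(c <- undup (map f r)) \sum_(x <- r | f x == c) F x = \sum_(x <- r) F x.
Proof.
under eq_bigr => c _ do rewrite big_mkcond.
rewrite exchange_big /=; apply: eq_big_seq => x xr.
rewrite -big_mkcond /= -big_filter.
have -> : [seq c <- undup (map f r) | f x == c] = [:: f x].
  rewrite (eq_filter (a2 := pred1 (f x))); last by move=> c; rewrite /= eq_sym.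
  by rewrite filter_pred1_uniq ?undup_uniq // mem_undup map_f.
by rewrite big_seq1.
Qed.

Lemma rep_in (R : realFieldType) (I : instance R) (Abar : {set jact I}) a :
  is_rep_set Abar -> rep_of Abar a \in Abar /\ prof (rep_of Abar a) = prof a.
Proof.
move=> [ex _]; rewrite /rep_of; case: pickP => [ab /andP [h /eqP e] | none] //=.
have [ab h e] := ex a; by move: (none ab); rewrite h e eqxx.
Qed.

Lemma rep_id (R : realFieldType) (I : instance R) (Abar : {set jact I}) a :
  is_rep_set Abar -> a \in Abar -> rep_of Abar a = a.
Proof.
move=> hr ha; have [h e] := rep_in a hr; by case: hr => _ inj; apply: inj.
Qed.

Definition V (R : realFieldType) (I : instance R) (G : eqType)
  (sigma : Omega I -> jact I * G -> R) s (g : Omega I -> R) :=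
  \sum_w mu I w * sigma w s * g w.

Lemma uexpV (R : realFieldType) (I : instance R) (G : eqType) (S : seq (jact I * G))
  (sigma : Omega I -> jact I * G -> R) s T a rho :
  is_policy_on S sigma ->
  uexp T a rho (post_pub S sigma s) = V sigma s (u I T a rho) / prob_sent sigma s.
Proof.
move=> hp; rewrite /uexp /V mulr_suml; apply: eq_bigr => w _.
by rewrite post_pubE // mulrAC.
Qed.

Lemma pbE (R : realFieldType) (I : instance R) (G : eqType) (S : seq (jact I * G))
  (sigma : Omega I -> jact I * G -> R) s de T a b :
  is_policy_on S sigma -> 0 < prob_sent sigma s ->
  ((de, T, a, b) \in pub_block S sigma s) =
  [&& de \in Drho (prof s.1), (0 < de (T, a, b))%N &
      V sigma s (u I T b (padd (prof s.1) de)) <= V sigma s (u I T a (prof s.1))].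
Proof.
move=> hp hpos; rewrite inE /= !uexpV //.
by rewrite ler_pM2r // invr_gt0.
Qed.

Lemma zero_sig (R : realFieldType) (I : instance R) (G : eqType) (S : seq (jact I * G))
  (sigma : Omega I -> jact I * G -> R) s w :
  is_policy_on S sigma -> wf_instance I -> mu I w != 0 -> ~~ (0 < prob_sent sigma s) ->
  sigma w s = 0.
Proof.
move=> [_ s0 _ _] [m0 _ _ _] mw np.
have ge : forall w', 0 <= mu I w' * sigma w' s by move=> w'; rewrite mulr_ge0.
have : prob_sent sigma s == 0.
  by rewrite eq_le leNgt np /= sumr_ge0.
rewrite /prob_sent psumr_eq0 // => /allP /(_ w (mem_index_enum _)) /=.
by rewrite mulf_eq0 (negbTE mw) => /eqP.
Qed.

Lemma stable_gain (R : realFieldType) (I : instance R) (G : eqType) (S : seq (jact I * G))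
  (sigma : Omega I -> jact I * G -> R) s (N' : {set 'I_(n I)}) (a' : jact I) :
  ~ unstable S sigma (obs_pub (G:=G)) s -> N' != set0 -> (#|N'| <= d I)%N ->
  exists2 i, i \in N' & gain S sigma s N' a' i <= 0.
Proof.
move=> ns N0 Nd.
case: (boolP [forall i in N', 0 < gain S sigma s N' a' i]) => [/forallP H | /forallPn [i]].
  case: ns; apply/unstableE; exists N', a'; split => // i iN.
  by move: (H i); rewrite iN.
rewrite negb_imply => /andP [iN ng]; exists i => //.
by rewrite leNgt.
Qed.

Lemma bpub_of (R : realFieldType) (I : instance R) (G : eqType) (S : seq (jact I * G))
  (sigma : Omega I -> jact I * G -> R) s :
  ~ unstable S sigma (obs_pub (G:=G)) s ->
  Bpub (prof s.1) (pub_block S sigma s).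
Proof.
move=> ns; apply/andP; split.
  apply/forallP => -[[[de T] a] b]; apply/implyP; rewrite inE /= => /and3P [h1 h2 _].
  by rewrite h1 h2.
apply/forallP => de; apply/implyP => hde.
have [N' [a' [N0 Nd ha mk]]] := realize_dev hde.
have [i iN gi] := stable_gain a' ns N0 Nd.
apply/existsP; exists (de, tp I i, s.1 i, a' i); rewrite eqxx andbT inE /= hde /=.
apply/andP; split.
  rewrite -mk mkdevE // /cnt (bigD1 i) //= iN /key eqxx //.
by move: gi; rewrite /gain subr_le0 -mk padd_mkdev.
Qed.

Section Constr.
Variables (R : realFieldType) (I : instance R) (Abar : {set jact I})
  (G : eqType) (S : seq (jact I * G)) (sigma : Omega I -> jact I * G -> R).
Hypotheses (wf : wf_instance I) (hrep : is_rep_set Abar) (hpol : is_policy_on S sigma)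
  (hst : stable_public_policy S sigma).

Definition pos s := 0 < prob_sent sigma s.
Definition sgn s := (rep_of Abar s.1, pub_block S sigma s).
Definition sb0 w (c : jact I * {set dev I * K I * A I * A I}) :=
  \sum_(s <- S | pos s && (sgn s == c)) sigma w s.
Definition wsel w := if mu I w == 0 then odflt w [pick w' | mu I w' != 0] else w.
Definition sigb w c := sb0 (wsel w) c.
Definition Sbar := undup (map sgn [seq s <- S | pos s]).

Lemma wsel_mu w : mu I (wsel w) != 0.
Proof.
rewrite /wsel; case: (mu I w =P 0) => [h|/eqP //]; case: (pickP (fun w' => mu I w' != 0)) => [w' /= -> //|none] /=.
case: wf => _ s1 _ _; move: s1; rewrite big1 => [|w'' _]; last by move: (none w'') => /= /negbFE /eqP.
by move/eqP; rewrite eq_sym oner_eq0.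
Qed.

Lemma mu_pos w : mu I w != 0 -> 0 < mu I w.
Proof. by case: wf => m0 _ _ _ mw; rewrite lt_def mw m0. Qed.

Lemma mu_sigb w c : mu I w * sigb w c = mu I w * sb0 w c.
Proof. rewrite /sigb /wsel; case: eqP => [->|//]; by rewrite !mul0r. Qed.

Lemma sb0_sum w : mu I w != 0 -> \sum_(c <- Sbar) sb0 w c = 1.
Proof.
move=> mw; rewrite /Sbar /sb0.
under eq_bigr => c _ do rewrite -big_filter_cond.
rewrite group_sum big_filter big_mkcond /=.
case: hpol => _ _ _ /(_ w) <-; apply: eq_bigr => s _.
by case: ifP => // /negbT np; rewrite (zero_sig hpol wf mw np).
Qed.

Lemma sb0_out w c : c \notin Sbar -> sb0 w c = 0.
Proof.
move=> nc; rewrite /sb0 big1_seq // => s /andP [/andP [ps /eqP e] sS].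
by case/negP: nc; rewrite /Sbar mem_undup -e map_f // mem_filter ps.
Qed.

Lemma sigb_policy : is_policy_on Sbar sigb.
Proof.
split.
- exact: undup_uniq.
- move=> w c; rewrite /sigb /sb0; apply: sumr_ge0 => s _; by case: hpol.
- by move=> w c nc; rewrite /sigb sb0_out.
- by move=> w; rewrite /sigb sb0_sum // wsel_mu.
Qed.

Lemma sb0_nz w c : sb0 w c != 0 -> exists2 s, s \in S & pos s /\ sgn s = c.
Proof.
move=> nz; case: (boolP (has (fun s => pos s && (sgn s == c)) S)).
  by case/hasP => s sS /andP [ps /eqP e]; exists s.
move/hasPn => hn; case/negP: nz; apply/eqP; rewrite /sb0 big1_seq // => s /andP [h sS].
by move: (hn s sS); rewrite h.
Qed.

Lemma pos_inS s : pos s -> s \in S.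
Proof.
move=> ps; apply/negPn/negP => ns; move: ps; rewrite /pos /prob_sent big1 ?ltxx // => w _.
by case: hpol => _ _ out _; rewrite out // mulr0.
Qed.

Lemma Vmix c g : V sigb c g = \sum_(s <- S | pos s && (sgn s == c)) V sigma s g.
Proof.
rewrite /V exchange_big /=; apply: eq_bigr => w _.
by rewrite mu_sigb /sb0 mulr_sumr mulr_suml.
Qed.

Lemma probmix c : prob_sent sigb c = \sum_(s <- S | pos s && (sgn s == c)) prob_sent sigma s.
Proof.
rewrite /prob_sent exchange_big /=; apply: eq_bigr => w _.
by rewrite mu_sigb /sb0 mulr_sumr.
Qed.

Lemma sgn_prof s : prof (sgn s).1 = prof s.1.
Proof. by have [_ ->] := rep_in s.1 hrep. Qed.

Lemma F_block s0 : pos s0 -> pub_block Sbar sigb (sgn s0) = pub_block S sigma s0.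
Proof.
move=> p0; set c := sgn s0.
have s0S := pos_inS p0.
have uS : uniq [seq s <- S | pos s & sgn s == c] by rewrite filter_uniq //; case: hpol.
have m0 : s0 \in [seq s <- S | pos s & sgn s == c] by rewrite mem_filter p0 eqxx.
have pc : 0 < prob_sent sigb c.
  rewrite probmix -big_filter (bigD1_seq s0 m0 uS).
  rewrite /= ltr_wpDr // big_seq_cond sumr_ge0 // => s /andP [+ _]; rewrite mem_filter => /andP [/andP [ps _] _]; exact: ltW.
have grp : forall s, pos s -> sgn s == c ->
   pub_block S sigma s = pub_block S sigma s0 /\ prof s.1 = prof s0.1.
  move=> s ps /eqP e; split; first by move: e => [_ ->].
  by rewrite -sgn_prof e sgn_prof.
apply/setP => -[[[de T] a] b].
rewrite (pbE de T a b sigb_policy pc) (pbE de T a b hpol p0) !Vmix sgn_prof.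
case: (boolP ((de \in Drho (prof s0.1)) && (0 < de (T, a, b))%N)) => [/andP [h1 h2] | ]; last first.
  by case: (de \in Drho _) => //; case: (0 < _)%N.
rewrite h1 h2 /=.
have hs : forall s, pos s -> sgn s == c ->
   (V sigma s (u I T b (padd (prof s0.1) de)) <= V sigma s (u I T a (prof s0.1))) =
   (V sigma s0 (u I T b (padd (prof s0.1) de)) <= V sigma s0 (u I T a (prof s0.1))).
  move=> s ps sc; have [e1 e2] := grp s ps sc.
  have X := pbE de T a b hpol ps; have Y := pbE de T a b hpol p0.
  rewrite e1 e2 h1 h2 /= in X; rewrite h1 h2 /= in Y; by rewrite -X Y.
case: (boolP (V sigma s0 _ <= V sigma s0 _)) => h3.
  apply: ler_sum => s /andP [ps sc]; by rewrite hs.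
apply/negbTE; rewrite -ltNge -subr_gt0 -sumrB -big_filter (bigD1_seq s0 m0 uS).
rewrite ltr_wpDr //.
  rewrite big_seq_cond; apply: sumr_ge0 => s /andP [+ _]; rewrite mem_filter => /andP [/andP [ps sc] _].
  by rewrite subr_ge0 ltW // ltNge hs.
by rewrite subr_gt0 ltNge.
Qed.

Lemma group_ne c : 0 < prob_sent sigb c -> exists2 s0, pos s0 & sgn s0 = c.
Proof.
rewrite probmix => pc; case: (boolP (has (fun s => pos s && (sgn s == c)) S)).
  by case/hasP => s sS /andP [ps /eqP e]; exists s.
move/hasPn => hn; move: pc; rewrite big1_seq ?ltxx // => s /andP [h sS].
by move: (hn s sS); rewrite h.
Qed.

Lemma sigb_stable : stable_public_policy Sbar sigb.
Proof.
move=> c pc; have [s0 ps0 <-] := group_ne pc.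
move=> /unstableE [N' [a' [N0 Nd H]]].
set c0 := sgn s0; set a := c0.1.
pose N'' := [set i in N' | a' i != a i].
have erep : replace N'' a a' = replace N' a a'.
  apply/ffunP => i; rewrite !ffunE inE; case: (i \in N') => //=.
  by case: (a' i =P a i) => //= ->.
have ha : forall j, j \in N'' -> a' j != a j by move=> j; rewrite inE => /andP [].
have Nd' : (#|N''| <= d I)%N.
  apply: leq_trans (Nd); apply: subset_leq_card; apply/subsetP => j; rewrite inE => /andP [] //.
have N0' : N'' != set0.
  apply/negP => /eqP e0; case/set0Pn: N0 => i iN.
  have := H i iN; rewrite /gain -erep e0.
  have -> : replace set0 a a' = a by apply/ffunP => j; rewrite ffunE in_set0.
  have : i \notin N'' by rewrite e0 in_set0.
  rewrite inE iN /= negbK => /eqP ->; by rewrite subrr ltxx.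
have hde := mkdev_Drho N0' Nd' ha.
have B := bpub_of (hst ps0).
move: hde; rewrite /a sgn_prof => hde.
case/andP: B => _ /forallP /(_ (mkdev a N'' a')) /implyP /(_ hde) /existsP [[[[de T] x0] y0]].
rewrite -(F_block ps0) /= => /andP [xin /eqP ede]; subst de.
move: xin; rewrite inE /= => /and3P [_ pde ineq].
move: pde; rewrite mkdevE // => /cnt_pos [i iN' [ti ai a'i]].
have iN : i \in N' by move: iN'; rewrite inE => /andP [].
have := H i iN; rewrite /gain -erep padd_mkdev // -/c0 -/a ti ai a'i.
by rewrite subr_gt0 ltNge ineq.
Qed.

Lemma sigb_sig c : 0 < prob_sent sigb c -> pub_signature Sbar sigb Abar c = c.
Proof.
move=> pc; have [s0 ps0 <-] := group_ne pc.
rewrite /pub_signature F_block //; congr (_, _).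
have [h _] := rep_in s0.1 hrep; by rewrite /= rep_id.
Qed.

Lemma sigb_valid w c : sigb w c != 0 -> c.1 \in Abar /\ Bpub (prof c.1) c.2.
Proof.
move=> /sb0_nz [s sS [ps <-]]; split; first by have [] := rep_in s.1 hrep.
rewrite sgn_prof; exact: bpub_of (hst ps).
Qed.

Lemma u0_le : u0_of S sigma <= u0_of Sbar sigb.
Proof.
apply: ler_sum => w _; case: (mu I w =P 0) => [->|/eqP mw]; first by rewrite !mul0r.
rewrite /sigb /wsel (negbTE mw).
have -> : \sum_(c <- Sbar) sb0 w c * u0 I (prof c.1) w =
          \sum_(c <- Sbar) \sum_(s <- [seq s <- S | pos s] | sgn s == c) sigma w s * u0 I (prof (sgn s).1) w.
  apply: eq_bigr => c _; rewrite /sb0 mulr_suml big_filter_cond.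
  by apply: eq_bigr => s /andP [_ /eqP ->].
rewrite /Sbar group_sum big_filter big_mkcond /=.
rewrite le_eqVlt; apply/orP; left; apply/eqP; congr (_ * _).
rewrite [RHS]big_mkcond; apply: eq_bigr => s _; have [_ ->] := rep_in s.1 hrep.
case: ifP => // /negbT np.
by rewrite (zero_sig hpol wf mw np) mul0r.
Qed.

End Constr.

Theorem theorem1 (R : realFieldType) (I : instance R) (Abar : {set jact I})
  (G : eqType) (S : seq (jact I * G)) (sigma : Omega I -> jact I * G -> R) :
  wf_instance I -> is_rep_set Abar ->
  is_policy_on S sigma -> stable_public_policy S sigma ->
  exists (Sb : seq (jact I * {set dev I * K I * A I * A I}))
         (sigb : Omega I -> jact I * {set dev I * K I * A I * A I} -> R),
    [/\ is_policy_on Sb sigb,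
        (forall w c, sigb w c != 0 -> c.1 \in Abar /\ Bpub (prof c.1) c.2),
        stable_public_policy Sb sigb,
        u0_of S sigma <= u0_of Sb sigb &
        (forall c, 0 < prob_sent sigb c -> pub_signature Sb sigb Abar c = c)].
Proof.
move=> wf hrep hpol hst.
exists (Sbar Abar S sigma), (sigb Abar S sigma); split.
- exact: sigb_policy.
- move=> w c; exact: sigb_valid.
- exact: sigb_stable.
- exact: u0_le.
- move=> c; exact: sigb_sig.
Qed.
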